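(* Let $A$ be a multiset of points in $\mathbb{Z}^2$ with $|A|\geq 6$ (counting multiplicities). If $\boldsymbol{p}\in\mathbb{R}^2$ is a point with $\boldsymbol{p}\notin A$ that has half-space depth $2$ with respect to $A$, then $A$ can be partitioned into two submultisets $A_1,A_2$ with $\boldsymbol{p}\in\conv(A_1)\cap\conv(A_2)$.
   Context: A point $\boldsymbol{p}$ has half-space depth $t$ with respect to a multiset $A$ if every closed half-plane containing $\boldsymbol{p}$ contains at least $t$ points of $A$, counted with multiplicity. A partition of a multiset into submultisets means the multiplicities of each element in the parts sum to its multiplicity in the multiset. *)

(* Defs.v *)
From HB Require Import structures.
From mathcomp Require Import all_boot all_order all_algebra.
From mathcomp Require Import reals.
Set Implicit Arguments. Unset Strict Implicit. Unset Printing Implicit Defensive.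
Import Order.TTheory GRing.Theory Num.Theory.
Local Open Scope ring_scope.

(* A multiset of n points of Z^2 is an indexed family a : 'I_n -> int * int
   (multiplicity = number of indices with that value).  Its embedding in R^2: *)
Definition ptR (R : realType) (z : int * int) : R * R := (z.1%:~R, z.2%:~R).

Definition dot (R : realType) (u x : R * R) : R := u.1 * x.1 + u.2 * x.2.

Definition halfspace_depth_ge (R : realType) (n : nat) (a : 'I_n -> int * int)
    (p : R * R) (t : nat) : Prop :=
  forall (u : R * R) (c : R), u != (0, 0) -> dot u p <= c ->
    (t <= #|[set i : 'I_n | (dot u (ptR R (a i)) <= c)%R]|)%N.

Definition in_conv (R : realType) (n : nat) (a : 'I_n -> int * int)
    (S : {set 'I_n}) (p : R * R) : Prop :=
  exists w : 'I_n -> R,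
    [/\ forall i, 0 <= w i,
        forall i, i \notin S -> w i = 0,
        \sum_(i < n) w i = 1,
        \sum_(i < n) w i * (ptR R (a i)).1 = p.1
      & \sum_(i < n) w i * (ptR R (a i)).2 = p.2].

(* Main.v *)
Require Import Defs.
From HB Require Import structures.
From mathcomp Require Import all_boot all_order all_algebra.
From mathcomp Require Import reals.
From mathcomp Require Import lra ring zify.
Import Order.TTheory GRing.Theory Num.Theory.
Local Open Scope ring_scope.

Section Angle.
Context {R : realType}.
Implicit Types a b u : R * R.

Definition cross a b : R := a.1 * b.2 - a.2 * b.1.
Definition dt a b : R := a.1 * b.1 + a.2 * b.2.
Definition neg a : R * R := (- a.1, - a.2).
Definition nz a := a.1 != 0 \/ a.2 != 0.
Definition U a : bool := (0 < a.2) || ((a.2 == 0) && (0 < a.1)).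
Definition g a : R := if 0 < a.1 then a.2 / (a.1 + a.2)
  else 1 + (- a.1) / (- a.1 + a.2).
Definition th a : R := if U a then g a else 2 + g (neg a).

Lemma U_ge0 {a} : U a -> 0 <= a.2.
Proof. by rewrite /U; case/orP=> [/ltW//|/andP[/eqP-> _]]. Qed.

Lemma U_x {a} : U a -> a.1 <= 0 -> 0 < a.2.
Proof. rewrite /U; case/orP=> [//|/andP[_ h] h']. lra. Qed.

Lemma g_bnd {a} : U a -> 0 <= g a < 2.
Proof.
move=> Ua; have h2 := U_ge0 Ua; rewrite /g; case: ifP => h1.
  have hd : 0 < a.1 + a.2 by lra.
  apply/andP; split; first by apply: divr_ge0; lra.
  rewrite ltr_pdivrMr //; lra.
have h3 : a.1 <= 0 by rewrite leNgt h1.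
have h4 := U_x Ua h3.
have hd : 0 < - a.1 + a.2 by lra.
have : 0 <= (- a.1) / (- a.1 + a.2) < 1.
  apply/andP; split; first by apply: divr_ge0; lra.
  rewrite ltr_pdivrMr //; lra.
move=> /andP[? ?]; apply/andP; split; lra.
Qed.

Lemma g_le a b : U a -> U b -> (g a <= g b) = (0 <= cross a b).
Proof.
move=> Ua Ub; have ha := U_ge0 Ua; have hb := U_ge0 Ub.
rewrite /g /cross.
case: ifP => h1; case: ifP => h2.
- have da : 0 < a.1 + a.2 by lra.
  have db : 0 < b.1 + b.2 by lra.
  rewrite ler_pdivrMr // mulrAC ler_pdivlMr //.
  apply/idP/idP => H; nra.
- have h2' : b.1 <= 0 by rewrite leNgt h2.
  have := U_x Ub h2'. move=> hb2.
  have db : 0 < - b.1 + b.2 by lra.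
  have da : 0 < a.1 + a.2 by lra.
  have : a.2 / (a.1 + a.2) < 1 by rewrite ltr_pdivrMr //; lra.
  have : 0 <= - b.1 / (- b.1 + b.2) by apply: divr_ge0; lra.
  move=> *; apply/idP/idP => H; [nra | lra].
- have h1' : a.1 <= 0 by rewrite leNgt h1.
  have := U_x Ua h1'. move=> ha2.
  have da : 0 < - a.1 + a.2 by lra.
  have db : 0 < b.1 + b.2 by lra.
  have : b.2 / (b.1 + b.2) < 1 by rewrite ltr_pdivrMr //; lra.
  have : 0 <= - a.1 / (- a.1 + a.2) by apply: divr_ge0; lra.
  move=> *; apply/idP/idP => H; [lra | nra].
- have h1' : a.1 <= 0 by rewrite leNgt h1.
  have h2' : b.1 <= 0 by rewrite leNgt h2.
  have := U_x Ua h1'; have := U_x Ub h2'; move=> hb2 ha2.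
  have da : 0 < - a.1 + a.2 by lra.
  have db : 0 < - b.1 + b.2 by lra.
  rewrite lerD2l ler_pdivrMr // mulrAC ler_pdivlMr //.
  apply/idP/idP => H; nra.
Qed.

Lemma crossC a b : cross b a = - cross a b.
Proof. rewrite /cross; ring. Qed.

Lemma g_lt a b : U a -> U b -> (g a < g b) = (0 < cross a b).
Proof.
move=> Ua Ub; rewrite ltNge g_le // crossC; apply/idP/idP => H.
  move: H; rewrite -ltNge; lra.
rewrite -ltNge; lra.
Qed.

Lemma U_neg {a} : nz a -> ~~ U a -> U (neg a).
Proof.
rewrite /nz /U /neg /= negb_or negb_and -!leNgt => Hnz /andP[h1 h2].
case: (ltrgtP a.2 0) => h3.
- by rewrite oppr_gt0 h3.
- lra.
- move: h2; rewrite h3 eqxx /= => h4.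
  have : a.1 != 0 by case: Hnz => // /negP; rewrite h3 eqxx.
  rewrite oppr0 ltxx eqxx /= oppr_gt0 => h5; rewrite lt_neqAle h5 h4.
  done.
Qed.

Lemma th_bnd {a} : nz a -> 0 <= th a < 4.
Proof.
move=> Hnz; rewrite /th; case: ifP => Ua.
  by have := g_bnd Ua; case/andP=> *; apply/andP; split; lra.
have := g_bnd (U_neg Hnz (negbT Ua)); case/andP=> *; apply/andP; split; lra.
Qed.

Lemma cross_neg1 a b : cross (neg a) b = - cross a b.
Proof. rewrite /cross /neg /=; ring. Qed.
Lemma cross_neg2 a b : cross a (neg b) = - cross a b.
Proof. rewrite /cross /neg /=; ring. Qed.

Lemma K2 {a b} : nz a -> nz b ->
  (0 <= th b - th a <= 2) \/ (th b - th a <= -2) -> 0 <= cross a b.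
Proof.
move=> na nb; rewrite /th.
case Ua: (U a); case Ub: (U b).
- have := g_bnd Ua; have := g_bnd Ub => /andP[? ?] /andP[? ?].
  case=> [/andP[h _]|h]; last lra.
  by rewrite -g_le //; lra.
- have Ub' := U_neg nb (negbT Ub).
  have := g_bnd Ua; have := g_bnd Ub' => /andP[? ?] /andP[? ?].
  case=> [/andP[_ h]|h]; last lra.
  have : g (neg b) <= g a by lra.
  rewrite g_le // cross_neg1 (crossC a b) opprK.
  by [].
- have Ua' := U_neg na (negbT Ua).
  have := g_bnd Ua'; have := g_bnd Ub => /andP[? ?] /andP[? ?].
  case=> [/andP[h _]|h]; first lra.
  have : g b <= g (neg a) by lra.
  by rewrite g_le // cross_neg2 (crossC a b) opprK.
- have Ua' := U_neg na (negbT Ua); have Ub' := U_neg nb (negbT Ub).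
  have := g_bnd Ua'; have := g_bnd Ub' => /andP[? ?] /andP[? ?].
  case=> [/andP[h _]|h]; last lra.
  have : g (neg a) <= g (neg b) by lra.
  by rewrite g_le // cross_neg1 cross_neg2 opprK.
Qed.

Lemma K2s {a b} : nz a -> nz b ->
  (0 < th b - th a < 2) \/ (th b - th a < -2) -> 0 < cross a b.
Proof.
move=> na nb; rewrite /th.
case Ua: (U a); case Ub: (U b).
- have := g_bnd Ua; have := g_bnd Ub => /andP[? ?] /andP[? ?].
  case=> [/andP[h _]|h]; last lra.
  by rewrite -g_lt //; lra.
- have Ub' := U_neg nb (negbT Ub).
  have := g_bnd Ua; have := g_bnd Ub' => /andP[? ?] /andP[? ?].
  case=> [/andP[_ h]|h]; last lra.
  have : g (neg b) < g a by lra.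
  by rewrite g_lt // cross_neg1 (crossC a b) opprK.
- have Ua' := U_neg na (negbT Ua).
  have := g_bnd Ua'; have := g_bnd Ub => /andP[? ?] /andP[? ?].
  case=> [/andP[h _]|h]; first lra.
  have : g b < g (neg a) by lra.
  by rewrite g_lt // cross_neg2 (crossC a b) opprK.
- have Ua' := U_neg na (negbT Ua); have Ub' := U_neg nb (negbT Ub).
  have := g_bnd Ua'; have := g_bnd Ub' => /andP[? ?] /andP[? ?].
  case=> [/andP[h _]|h]; last lra.
  have : g (neg a) < g (neg b) by lra.
  by rewrite g_lt // cross_neg1 cross_neg2 opprK.
Qed.

Lemma UU_dot {a b} : U a -> U b -> cross a b = 0 -> 0 < dt a b.
Proof.
rewrite /U /cross /dt => /orP[ha|/andP[/eqP ha ha1]] /orP[hb|/andP[/eqP hb hb1]] h.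
- have e : (a.1 * b.1 + a.2 * b.2) * b.2 = a.2 * (b.1 ^+ 2 + b.2 ^+ 2).
    transitivity (a.2 * b.1 * b.1 + b.1 * (a.1 * b.2 - a.2 * b.1) + a.2 * b.2 * b.2); first ring.
    rewrite h; ring.
  have : 0 < a.2 * (b.1 ^+ 2 + b.2 ^+ 2) by apply: mulr_gt0 => //; nra.
  rewrite -e => H; rewrite -(pmulr_lgt0 _ hb); lra.
- rewrite hb in h *; nra.
- rewrite ha in h *; nra.
- rewrite ha hb; nra.
Qed.

Lemma K3 {a b} : nz a -> nz b -> cross a b = 0 -> 0 < dt a b -> th a = th b.
Proof.
move=> na nb hc hd; rewrite /th.
case Ua: (U a); case Ub: (U b).
- apply/eqP; rewrite eq_le !g_le // (crossC a b) hc oppr0 lexx //.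
- have Ub' := U_neg nb (negbT Ub).
  have := UU_dot Ua Ub'; rewrite cross_neg2 hc oppr0 => /(_ erefl).
  move: hd; rewrite /dt /neg /=; lra.
- have Ua' := U_neg na (negbT Ua).
  have := UU_dot Ua' Ub; rewrite cross_neg1 hc oppr0 => /(_ erefl).
  move: hd; rewrite /dt /neg /=; lra.
- have Ua' := U_neg na (negbT Ua); have Ub' := U_neg nb (negbT Ub).
  congr (_ + _); apply/eqP; rewrite eq_le !g_le //.
  by rewrite !cross_neg1 !cross_neg2 !opprK (crossC a b) hc oppr0 lexx.
Qed.

Definition dir0 (s : R) : R * R := if s < 1 then (1 - s, s) else (1 - s, 2 - s).
Definition dir (s : R) : R * R := if s < 2 then dir0 s else neg (dir0 (s - 2)).

Lemma dir0_U s : 0 <= s < 2 -> U (dir0 s) /\ g (dir0 s) = s.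
Proof.
case/andP=> h0 h2; rewrite /dir0 /U /g; case: ifP => h1 /=.
  have -> : 0 < 1 - s by lra.
  split; last first.
    have -> : 1 - s + s = 1 by ring.
    by rewrite divr1.
  have [hs|hs] : 0 < s \/ s = 0 by lra.
    by rewrite hs.
  rewrite hs ltxx eqxx /=; lra.
have h1' : 1 <= s by rewrite leNgt h1.
have -> : (0 < 1 - s) = false by apply/negbTE; rewrite -leNgt; lra.
have -> : (0 < 2 - s) by lra.
split=> //.
have -> : - (1 - s) + (2 - s) = 1 by ring.
rewrite divr1; ring.
Qed.

Lemma dir_th s : 0 <= s < 4 -> nz (dir s) /\ th (dir s) = s.
Proof.
case/andP=> h0 h4; rewrite /dir; case: ifP => h2.
  have [Ud gd] : U (dir0 s) /\ g (dir0 s) = s by apply: dir0_U; lra.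
  split; last by rewrite /th Ud.
  move: Ud; rewrite /U /nz => /orP[h|/andP[_ h]]; [right|left]; lra.
have h2' : 2 <= s by rewrite leNgt h2.
have [Ud gd] : U (dir0 (s - 2)) /\ g (dir0 (s - 2)) = s - 2 by apply: dir0_U; lra.
have nzd : nz (dir0 (s-2)).
  move: Ud; rewrite /U /nz => /orP[h|/andP[_ h]]; [right|left]; lra.
have nzn : nz (neg (dir0 (s-2))).
  by rewrite /nz /neg /= !oppr_eq0.
split=> //.
have nU : ~~ U (neg (dir0 (s - 2))).
  move: Ud; rewrite /U /neg /= => /orP[h|/andP[/eqP h h']].
    rewrite negb_or oppr_gt0 -leNgt ltW //= oppr_eq0 negb_and.
    by rewrite gt_eqF.
  by rewrite h oppr0 ltxx eqxx /= oppr_gt0 -leNgt ltW.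
rewrite /th (negbTE nU).
have -> : neg (neg (dir0 (s - 2))) = dir0 (s - 2).
  by rewrite /neg /= !opprK; case: (dir0 _).
rewrite gd; ring.
Qed.

End Angle.


Lemma sum_delta (R : realType) n (j : 'I_n) (F : 'I_n -> R) :
  \sum_(i < n) (i == j)%:R * F i = F j.
Proof.
rewrite (bigD1 j) //= eqxx mul1r big1 ?addr0 // => i /negbTE ->.
by rewrite mul0r.
Qed.

Section Conv.
Variables (R : realType) (n : nat) (a : 'I_n -> int * int) (p : R * R).
Definition vv (i : 'I_n) : R * R :=
  ((ptR R (a i)).1 - p.1, (ptR R (a i)).2 - p.2).

Lemma conv3 (S : {set 'I_n}) i1 i2 i3 (c1 c2 c3 : R) :
  i1 \in S -> i2 \in S -> i3 \in S -> 0 <= c1 -> 0 <= c2 -> 0 <= c3 ->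
  0 < c1 + c2 + c3 ->
  c1 * (vv i1).1 + c2 * (vv i2).1 + c3 * (vv i3).1 = 0 ->
  c1 * (vv i1).2 + c2 * (vv i2).2 + c3 * (vv i3).2 = 0 ->
  in_conv a S p.
Proof.
move=> h1 h2 h3 c1p c2p c3p Cp e1 e2.
set C := c1 + c2 + c3.
have key : forall F : 'I_n -> R,
  \sum_(i < n) ((c1 * (i == i1)%:R + c2 * (i == i2)%:R + c3 * (i == i3)%:R) / C) * F i
  = (c1 * F i1 + c2 * F i2 + c3 * F i3) / C.
  move=> F.
  rewrite (eq_bigr (fun i => (c1 * ((i == i1)%:R * F i) + c2 * ((i == i2)%:R * F i)
      + c3 * ((i == i3)%:R * F i)) / C)); last by move=> i _; rewrite mulrAC; congr (_ / _); ring.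
  by rewrite -mulr_suml !big_split /= -!mulr_sumr !sum_delta.
exists (fun i => (c1 * (i == i1)%:R + c2 * (i == i2)%:R + c3 * (i == i3)%:R) / C).
split.
- move=> i; apply: divr_ge0; last exact: ltW.
  by rewrite !addr_ge0 // mulr_ge0.
- move=> i iS /=.
  have [ei|n1] := eqVneq i i1; first by move: iS; rewrite ei h1.
  have [ei|n2] := eqVneq i i2; first by move: iS; rewrite ei h2.
  have [ei|n3] := eqVneq i i3; first by move: iS; rewrite ei h3.
  by rewrite !mulr0 !addr0 mul0r.
- have := key (fun _ => 1); under eq_bigr => i _ do rewrite mulr1.
  rewrite !mulr1 => ->; rewrite divff //; exact: lt0r_neq0.
- rewrite key.
  have E : forall i, (ptR R (a i)).1 = (vv i).1 + p.1 by move=> i; rewrite /vv /=; ring.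
  rewrite !E.
  have -> : c1 * ((vv i1).1 + p.1) + c2 * ((vv i2).1 + p.1) + c3 * ((vv i3).1 + p.1)
     = (c1 * (vv i1).1 + c2 * (vv i2).1 + c3 * (vv i3).1) + C * p.1 by rewrite /C; ring.
  rewrite e1 add0r mulrC mulKf //; exact: lt0r_neq0.
- rewrite key.
  have E : forall i, (ptR R (a i)).2 = (vv i).2 + p.2 by move=> i; rewrite /vv /=; ring.
  rewrite !E.
  have -> : c1 * ((vv i1).2 + p.2) + c2 * ((vv i2).2 + p.2) + c3 * ((vv i3).2 + p.2)
     = (c1 * (vv i1).2 + c2 * (vv i2).2 + c3 * (vv i3).2) + C * p.2 by rewrite /C; ring.
  rewrite e2 add0r mulrC mulKf //; exact: lt0r_neq0.
Qed.

End Conv.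
Arguments vv {R n} a p i.


Lemma natdiff (R : realType) (x y : nat) :
  let D := (x%:R - y%:R : R) in D <= -1 \/ D = 0 \/ D = 1 \/ 2 <= D.
Proof.
move=> D; case: (ltngtP x y) => h.
- left; rewrite /D; have : (x.+1%:R <= y%:R :> R) by rewrite ler_nat.
  rewrite -addn1 natrD; lra.
- case: (ltngtP x y.+1) => h'.
  + lia.
  + right; right; right; rewrite /D.
    have : ((y.+2)%:R <= x%:R :> R) by rewrite ler_nat.
    rewrite -addn2 natrD; lra.
  + by right; right; left; rewrite /D h' -addn1 natrD; ring.
- by right; left; rewrite /D h subrr.
Qed.

Lemma nz_cross_dt {R : realType} {x y : R * R} : nz x -> nz y ->
  cross x y = 0 -> dt x y = 0 -> False.
Proof.
move=> nx ny hc hd.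
have e : (x.1 ^+ 2 + x.2 ^+ 2) * (y.1 ^+ 2 + y.2 ^+ 2) = cross x y ^+ 2 + dt x y ^+ 2.
  rewrite /cross /dt; ring.
have px : 0 < x.1 ^+ 2 + x.2 ^+ 2.
  case: nx => h; [have := sqr_ge0 x.2; have : 0 < x.1 ^+ 2 by rewrite exprn_even_gt0
   | have := sqr_ge0 x.1; have : 0 < x.2 ^+ 2 by rewrite exprn_even_gt0]; lra.
have py : 0 < y.1 ^+ 2 + y.2 ^+ 2.
  case: ny => h; [have := sqr_ge0 y.2; have : 0 < y.1 ^+ 2 by rewrite exprn_even_gt0
   | have := sqr_ge0 y.1; have : 0 < y.2 ^+ 2 by rewrite exprn_even_gt0]; lra.
have := mulr_gt0 px py; rewrite e hc hd expr0n /= addr0; lra.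
Qed.

Lemma dt_self_gt0 {R : realType} {y : R * R} : nz y -> 0 < dt y y.
Proof.
rewrite /dt => ny.
case: ny => h; [have := sqr_ge0 y.2; have : 0 < y.1 ^+ 2 by rewrite exprn_even_gt0
   | have := sqr_ge0 y.1; have : 0 < y.2 ^+ 2 by rewrite exprn_even_gt0]; rewrite !expr2; lra.
Qed.

Lemma tri (R : realType) (x : nat -> R) (m : nat) : (0 < m)%N ->
  (forall l, (l.+1 < m)%N -> x l <= x l.+1 <= x l + 2) ->
  x m.-1 <= x 0%N + 4 <= x m.-1 + 2 ->
  exists q r, [/\ (q < m)%N, (r < m)%N, x 0%N <= x q <= x 0%N + 2,
     x q <= x r <= x q + 2 & x r <= x 0%N + 4 <= x r + 2].
Proof.
move=> m0 step wrap.
have mono : forall i j, (i <= j)%N -> (j < m)%N -> x i <= x j.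
  move=> i j; elim: j => [|j IH] hij hj.
    by move: hij; rewrite leqn0 => /eqP ->.
  case: (ltngtP i j.+1) => h; last by rewrite h.
  + have := step j hj => /andP[h1 _].
    apply: le_trans h1; apply: IH => //; lia.
  + lia.
have [allP|] := boolP [forall l : 'I_m, x l <= x 0%N + 2].
  exists m.-1, m.-1; split; try lia.
  - apply/andP; split; first by apply: mono; lia.
    have hm : (m.-1 < m)%N by lia.
    exact: (forallP allP (Ordinal hm)).
  - by rewrite lexx /=; lra.
rewrite negb_forall => /existsP ex.
have ex' : exists l, (l < m)%N && ~~ (x l <= x 0%N + 2).
  by case: ex => l hl; exists l; rewrite ltn_ord.
case: (ex_minnP ex') => l /andP[lm hl] lmin.
have l0 : (0 < l)%N.
  case: l lm hl lmin => // _ h; exfalso; move: h; rewrite -ltNge; lra.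
exists l.-1, l; split; try lia.
- apply/andP; split; first by apply: mono; lia.
  have : ~~ ((l.-1 < m)%N && ~~ (x l.-1 <= x 0%N + 2)).
    apply/negP => /lmin; lia.
  by rewrite negb_and negbK ltnW ?orFb //= ; lia.
- have := step l.-1; rewrite prednK // => /(_ lm).
  done.
- move: hl; rewrite -ltNge => hl.
  have : x l <= x m.-1 by apply: mono; lia.
  move=> hlm; move: wrap => /andP[w1 w2].
  apply/andP; split; lra.
Qed.

Section Core.
Variables (R : realType) (n : nat) (a : 'I_n -> int * int) (p : R * R).
Local Notation v := (@vv R n a p).
Hypothesis nzv : forall i, nz (v i).
Variables (f : nat -> 'I_n) (T : nat -> R) (w : nat -> nat).
Hypothesis H1 : forall k k', (k <= k')%N -> T k <= T k'.
Hypothesis H2 : forall k, T (k + n)%N = T k + 4.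
Hypothesis H3 : forall k, T k.+2 <= T k + 2.
Hypothesis H4 : T n.+1 <= T (n - 2)%N + 2.
Hypothesis H5 : forall k, f (k + n)%N = f k.
Hypothesis H5' : forall k k', f k = f k' -> (k %% n = k' %% n)%N.
Hypothesis H6 : forall k, T k = th (v (f k)) + 4 * (w k)%:R.
Hypothesis Hn : (6 <= n)%N.

Lemma pos_cross k k' : 0 <= T k' - T k <= 2 -> 0 <= cross (v (f k)) (v (f k')).
Proof.
rewrite !H6 => /andP[h1 h2].
have := th_bnd (nzv (f k)); have := th_bnd (nzv (f k')) => /andP[b1 b2] /andP[b3 b4].
apply: K2 => //.
case: (natdiff R (w k') (w k)) => [|[|[|]]] hD; try lra.
Qed.

Lemma pos_dot k k' : 0 < T k' - T k < 4 -> cross (v (f k)) (v (f k')) = 0 ->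
  dt (v (f k)) (v (f k')) < 0.
Proof.
move=> /andP[h1 h2] hc.
case: (ltrgtP (dt (v (f k)) (v (f k'))) 0) => // hd.
  have := K3 (nzv _) (nzv _) hc hd.
  move: h1 h2; rewrite !H6 => h1 h2 he.
  case: (natdiff R (w k') (w k)) => [|[|[|]]] hD; lra.
by case: (nz_cross_dt (nzv (f k)) (nzv (f k')) hc hd).
Qed.

Lemma pair_conv (S : {set 'I_n}) k k' : f k \in S -> f k' \in S ->
  0 < T k' - T k <= 2 -> cross (v (f k)) (v (f k')) = 0 -> in_conv a S p.
Proof.
move=> hk hk' /andP[h1 h2] hc.
have hd := @pos_dot k k' ltac:(apply/andP; split; lra) hc.
have hy := dt_self_gt0 (nzv (f k')).
apply: (@conv3 R n a p S _ _ _ (dt (v (f k')) (v (f k'))) (- dt (v (f k)) (v (f k')))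
  0 hk hk' hk); try lra.
- move: hc; rewrite /cross /dt => hc.
  have -> : (v (f k')).1 * (v (f k')).1 + (v (f k')).2 * (v (f k')).2 = 
    (v (f k')).1 ^+ 2 + (v (f k')).2 ^+ 2 by rewrite !expr2.
  transitivity ((v (f k')).2 * ((v (f k)).1 * (v (f k')).2 - (v (f k)).2 * (v (f k')).1)).
    ring.
  by rewrite hc mulr0.
- move: hc; rewrite /cross /dt => hc.
  transitivity (- (v (f k')).1 * ((v (f k)).1 * (v (f k')).2 - (v (f k)).2 * (v (f k')).1)).
    ring.
  by rewrite hc mulr0.
Qed.

Lemma tri_conv (S : {set 'I_n}) P Q Rr : f P \in S -> f Q \in S -> f Rr \in S ->
  0 <= T Q - T P <= 2 -> 0 <= T Rr - T Q <= 2 -> 0 <= T (P + n)%N - T Rr <= 2 ->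
  in_conv a S p.
Proof.
move=> hP hQ hR g1 g2 g3.
have c1 := pos_cross _ _ g1; have c2 := pos_cross _ _ g2; have c3 := pos_cross _ _ g3.
rewrite H5 in c3.
set x := v (f P) in c1 c3 *; set y := v (f Q) in c1 c2 *; set z := v (f Rr) in c2 c3 *.
have [pos|zero] : 0 < cross y z + cross z x + cross x y \/
   (cross y z = 0 /\ cross z x = 0 /\ cross x y = 0) by lra.
  apply: (@conv3 R n a p S _ _ _ (cross y z) (cross z x) (cross x y) hP hQ hR) => //.
  - rewrite -/x -/y -/z /cross; ring.
  - rewrite -/x -/y -/z /cross; ring.
case: zero => [z1 [z2 z3]].
move: g3; rewrite H2 => g3.
have [e1|[e2|e3]] : 0 < T Q - T P \/ 0 < T Rr - T Q \/ 0 < T P + 4 - T Rr by lra.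
- by apply: (@pair_conv _ P (Q)) => //; apply/andP; split; lra.
- by apply: (@pair_conv _ Q (Rr)) => //; apply/andP; split; lra.
- apply: (@pair_conv _ Rr (P + n)) => //; first by rewrite H5.
    by rewrite H2; apply/andP; split; lra.
  by rewrite H5.
Qed.


Lemma core_exists : exists S : {set 'I_n}, in_conv a S p /\ in_conv a (~: S) p.
Proof.
pose S := [set i | [exists k : 'I_n, ~~ odd k && (f k == i)]].
exists S.
have hh := odd_double_half n.
move: hh; set h := n./2 => hh.
have hb : (2 * h <= n <= 2 * h + 1)%N.
  by move: hh; rewrite -mul2n; case: (odd n) => /= <-; lia.
clear hh.
split.
- pose x := fun l => T (2 * l)%N.
  have [q [r [qm rm g1 g2 g3]]] := @tri R x (n - h) ltac:(lia)
    ltac:(move=> l hl; rewrite /x (_ : (2 * l.+1 = (2 * l).+2)%N); last lia;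
          rewrite H3 H1 //; lia) ltac:(
    rewrite /x -H2 add0n; apply/andP; split; [apply: H1; lia|];
    apply: (le_trans (y := T (n - 2)%N + 2)); [
      have := H3 (n - 2)%N; rewrite (_ : ((n - 2).+2 = n)%N) //; lia |
      rewrite lerD2r; apply: H1; lia]).
  have inS : forall k, (k < n)%N -> ~~ odd k -> f k \in S.
    move=> k kn ok; rewrite inE; apply/existsP; exists (Ordinal kn) => /=.
    by rewrite ok eqxx.
  apply: (@tri_conv S 0 (2 * q) (2 * r)).
  + by apply: inS; lia.
  + apply: inS; [lia|]; by rewrite oddM.
  + apply: inS; [lia|]; by rewrite oddM.
  + by move: g1; rewrite /x muln0; lra.
  + by move: g2; rewrite /x; lra.
  + by move: g3; rewrite /x muln0 H2; lra.
- pose x := fun l => T (2 * l).+1.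
  have [q [r [qm rm g1 g2 g3]]] := @tri R x h ltac:(lia)
    ltac:(move=> l hl; rewrite /x (_ : ((2 * l.+1).+1 = (2 * l).+3)%N); last lia;
          rewrite H3 H1 //; lia) ltac:(
    rewrite /x muln0 -H2 add1n; apply/andP; split; [apply: H1; lia|];
    apply: (le_trans H4); rewrite lerD2r; apply: H1; lia).
  have inS : forall k, (k < n)%N -> odd k -> f k \in ~: S.
    move=> k kn ok; rewrite !inE negb_exists; apply/forallP => k' /=.
    apply/negP => /andP[ok' /eqP e].
    have := H5' _ _ e; rewrite (modn_small (ltn_ord k')) (modn_small kn).
    by move=> e'; move: ok'; rewrite e' ok.
  apply: (@tri_conv (~: S) 1 (2 * q).+1 (2 * r).+1).
  + by apply: inS; lia.
  + apply: inS; [lia|]; by rewrite /= oddM.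
  + apply: inS; [lia|]; by rewrite /= oddM.
  + by move: g1; rewrite /x muln0; lra.
  + by move: g2; rewrite /x; lra.
  + by move: g3; rewrite /x muln0 H2; lra.
Qed.

End Core.



Lemma core2 (R : realType) (n : nat) (a : 'I_n -> int * int) (p : R * R)
  (nzv : forall i, nz (vv a p i)) (f : nat -> 'I_n) (T : nat -> R) (w : nat -> nat) :
  (forall k k', (k <= k')%N -> T k <= T k') ->
  (forall k, T (k + n)%N = T k + 4) ->
  (forall k, T k.+2 <= T k + 2) ->
  (forall k, f (k + n)%N = f k) ->
  (forall k k', f k = f k' -> (k %% n = k' %% n)%N) ->
  (forall k, T k = th (vv a p (f k)) + 4 * (w k)%:R) ->
  (6 <= n)%N ->
  exists S : {set 'I_n}, in_conv a S p /\ in_conv a (~: S) p.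
Proof.
move=> H1 H2 H3 H5 H5' H6 Hn.
have [h4|h4] : T n.+1 <= T (n - 2)%N + 2 \/ T (n + 4)%N <= T n.+1 + 2.
  have := H1 (n + 4)%N (n - 2 + n)%N ltac:(lia); rewrite H2 => e.
  case: (lerP (T n.+1) (T (n - 2)%N + 2)) => h; [by left|right]; lra.
  exact: (@core_exists R n a p nzv f T w H1 H2 H3 h4 H5 H5' H6 Hn).
apply: (@core_exists R n a p nzv (fun k => f (k + 3)%N) (fun k => T (k + 3)%N)
  (fun k => w (k + 3)%N)).
- move=> k k' h; apply: H1; lia.
- by move=> k; rewrite addnAC H2.
- move=> k; have -> : (k.+2 + 3 = (k + 3).+2)%N by rewrite !addnS.
  exact: H3.
- have -> : (n - 2 + 3 = n.+1)%N by lia.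
  have -> : (n.+1 + 3 = n + 4)%N by lia.
  exact: h4.
- by move=> k; rewrite addnAC H5.
- move=> k k' /H5' /eqP; rewrite eqn_modDr => /eqP //.
- by [].
- by [].
Qed.


Theorem lemma3 (R : realType) (n : nat) (a : 'I_n -> int * int) (p : R * R) :
  (6 <= n)%N ->
  (forall i : 'I_n, p <> ptR R (a i)) ->
  halfspace_depth_ge a p 2 ->
  exists S : {set 'I_n}, in_conv a S p /\ in_conv a (~: S) p.
Proof.
move=> Hn Hp Hd.
have nzv : forall i, nz (vv a p i).
  move=> i; rewrite /nz /vv /=.
  case: (eqVneq ((ptR R (a i)).1 - p.1) 0) => h1; last by left.
  case: (eqVneq ((ptR R (a i)).2 - p.2) 0) => h2; last by right.
  exfalso; apply: (Hp i).
  move/eqP: h1; rewrite subr_eq0 => /eqP h1.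
  move/eqP: h2; rewrite subr_eq0 => /eqP h2.
  by apply: injective_projections.
have n0 : (0 < n)%N by lia.
pose i0 : 'I_n := Ordinal n0.
pose le := fun i j : 'I_n => th (vv a p i) <= th (vv a p j).
pose s := sort le (enum 'I_n).
have size_s : size s = n by rewrite /s size_sort size_enum_ord.
have uniq_s : uniq s by rewrite /s sort_uniq enum_uniq.
have mem_s : forall i, i \in s by move=> i; rewrite /s mem_sort mem_enum.
have le_total : total le by move=> i j; apply: le_total.
have le_tr : transitive le by move=> j i k; apply: le_trans.
have le_rf : reflexive le by move=> i; apply: lexx.
have sorted_s : sorted le s by apply: sort_sorted.
pose f := fun k => nth i0 s (k %% n).
pose w := fun k => (k %/ n)%N.
pose T := fun k => th (vv a p (f k)) + 4 * (w k)%:R.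
have thb : forall i, 0 <= th (vv a p i) < 4 by move=> i; apply: th_bnd.
have H6 : forall k, T k = th (vv a p (f k)) + 4 * (w k)%:R by [].
have H5 : forall k, f (k + n)%N = f k by move=> k; rewrite /f modnDr.
have H5' : forall k k', f k = f k' -> (k %% n = k' %% n)%N.
  move=> k k' /eqP; rewrite /f nth_uniq ?size_s ?ltn_pmod //; by move/eqP.
have H2 : forall k, T (k + n)%N = T k + 4.
  move=> k; rewrite /T /w /= H5 divnDr ?dvdnn // divnn n0 natrD /=; ring.
have H1 : forall k k', (k <= k')%N -> T k <= T k'.
  move=> k k' kk.
  have := leq_div2r n kk; rewrite leq_eqVlt => /orP[/eqP e|lt].
    rewrite /T /w e lerD2r.
    have hm : (k %% n <= k' %% n)%N.
      have := divn_eq k n; have := divn_eq k' n; rewrite e; lia.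
    apply: (sorted_leq_nth le_tr le_rf i0 sorted_s) => //;
      by rewrite inE size_s ltn_pmod.
  have := thb (f k); have := thb (f k') => /andP[? ?] /andP[? ?].
  have : ((k %/ n).+1%:R <= (k' %/ n)%:R :> R) by rewrite ler_nat.
  rewrite /T /w -addn1 natrD; lra.
have hf : forall k, f k = nth i0 s (k %% n) by [].
have hw : forall k, w k = (k %/ n)%N by [].
clearbody T; clearbody w f.
have Tshift : forall j m, T (j + m * n)%N = T j + 4 * m%:R.
  move=> j; elim=> [|m IH]; first by rewrite mul0n addn0 mulr0 addr0.
  rewrite mulSn addnCA addnC H2 IH -addn1 natrD; ring.
have H3lt : forall j, (j < n)%N -> T j.+2 <= T j + 2.
  move=> j jn; rewrite leNgt; apply/negP => hgt.
  have Tj : T j = th (vv a p (f j)) by rewrite H6 hw divn_small // mulr0 addr0.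
  have tjb := thb (f j); rewrite -Tj in tjb; case/andP: tjb => tj0 tj4.
  have hT4 : T j.+2 <= T j + 4 by rewrite -H2; apply: H1; lia.
  have [s0 hs0] : exists s0, s0 = (T j + T j.+2) / 2 - 1 by eexists.
  have [sd [hsdb hsde]] : exists sd, 0 <= sd < 4 /\ (sd = s0 \/ sd = s0 - 4).
    case: (ltrP s0 4) => h.
      exists s0; split; last by left.
      apply/andP; split => //; lra.
    exists (s0 - 4); split; last by right.
    apply/andP; split; lra.
  have [nzd thd] := dir_th sd hsdb.
  set d := dir sd in nzd thd.
  pose u : R * R := (d.2, - d.1).
  have unz : u != (0, 0).
    apply/negP => /eqP [] h1 /eqP; rewrite oppr_eq0 => /eqP h2.
    by case: nzd => /negP; apply; apply/eqP.
  have card := Hd u (dot u p) unz (lexx _).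
  have : ([set i | dot u (ptR R (a i)) <= dot u p] \subset [set f j.+1]).
    apply/subsetP => i; rewrite !inE => hi.
    have hc : 0 <= cross d (vv a p i) by move: hi; rewrite /dot /cross /vv /u /=; lra.
    case: (eqVneq i (f j.+1)) => // hne; exfalso.
    set P := index i s.
    have hP : (P < n)%N by rewrite -size_s index_mem mem_s.
    have fP : f P = i by rewrite hf modn_small // nth_index.
    have thib := thb i; case/andP: thib => ti0 ti4.
    have hK : 0 < cross (vv a p i) d.
      apply: K2s => //; rewrite thd.
      have [Q [fQ jQ TQe Qc]] : exists Q, [/\ f Q = i, (j <= Q < j + n)%N,
          (T Q = th (vv a p i) \/ T Q = th (vv a p i) + 4) & (Q = j \/ (j.+2 <= Q)%N)].
        case: (leqP j P) => hjP.
          exists P; split => //; first by clear -hjP hP; lia.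
            by left; rewrite H6 fP hw divn_small // mulr0 addr0.
          case: (eqVneq P j.+1) => hP1; last by clear -hjP hP1 jn; lia.
          by exfalso; move: hne; rewrite -fP hP1 eqxx.
        exists (P + n)%N; split.
        - by rewrite H5.
        - by clear -hjP jn; lia.
        - right; rewrite H6 H5 fP hw divnDr ?dvdnn // divnn n0 divn_small // natrD /=; ring.
        - case: (eqVneq (P + n)%N j.+1) => hP1; last by clear -hjP hP1 jn; lia.
          by exfalso; move: hne; rewrite -fP -H5 hP1 eqxx.
      have TQb : T Q = T j \/ T j.+2 <= T Q <= T j + 4.
        case: Qc => [->|hQ]; first by left.
        right; apply/andP; split; first by apply: H1.
        by rewrite -H2; apply: H1; clear -jQ; lia.
      case: TQe => e1; case: hsde => e2; case: TQb => [e3|/andP[e3 e4]];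
        (case: (ltrP (sd - th (vv a p i)) 0) => hY; [right|left; apply/andP; split]); lra.
    by move: hc; rewrite -(opprK (cross d _)) -crossC oppr_ge0 leNgt hK.
  move=> sub; have := leq_trans card (subset_leq_card sub).
  by rewrite cards1.
have H3 : forall k, T k.+2 <= T k + 2.
  move=> k; have A := Tshift (k %% n)%N (k %/ n)%N; have B := Tshift (k %% n).+2 (k %/ n)%N.
  have e : ((k %% n).+2 + k %/ n * n = k.+2)%N by rewrite addSn addSn addnC -divn_eq.
  have e' : ((k %% n) + k %/ n * n = k)%N by rewrite addnC -divn_eq.
  rewrite e in B; rewrite e' in A.
  have := H3lt (k %% n)%N (ltn_pmod k n0); lra.
exact: (@core2 R n a p nzv f T w H1 H2 H3 H5 H5' H6 Hn).
Qed.
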